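(* Consider $f:\mathbb R^n\to\mathbb R$ convex and continuously differentiable, $A\in\mathbb R^{m\times n}$, $b\in\mathbb R^m$, with nonempty KKT set $\Omega$. Let $\{(x_k,\lambda_k)\}_{k\ge0}$ be generated by the algorithm described in the context, write $z_k=(x_k,\lambda_k)$, and fix $z^*=(x^*,\lambda^* )\in\Omega$. Define $H_k=\mathcal L_\beta(x_k,\lambda^* )-\mathcal L_\beta(x^*,\lambda^* )$, $w_k=\eta(z_k-z^* )+(t_k-1)(z_k-z_{k-1})$, $B_k=\frac12\|w_k\|_M^2+\frac{\eta(1-\eta)}2\|z_k-z^*\|_M^2$ and $\mathcal E_k=t_k^2H_k+B_k$ for $k\ge1$. Then, for both Case I and Case II and every $k\ge1$, $\mathcal E_{k+1}-\mathcal E_k\le(\rho-\eta)t_{k+1}H_k-(1-\eta)(t_{k+1}-\tfrac12)\|z_{k+1}-z_k\|_M^2$.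
   Context: The KKT set is $\Omega=\{(x^*,\lambda^* ): Ax^*=b,\ \nabla f(x^* )+A^\top\lambda^*=0\}$. $\mathcal L_\beta(x,\lambda)=f(x)+\langle\lambda,Ax-b\rangle+\frac\beta2\|Ax-b\|^2$. For $z=(x,\lambda)$, $\|z\|_M^2=\frac1\gamma\|x\|^2+\frac1\delta\|\lambda\|^2$. Parameter sequence: $\{t_k\}_{k\ge1}$ is nondecreasing, $t_1=1$, $t_k>1$ for all $k>2$, $t_k\to+\infty$, and $t_{k+1}^2-t_k^2\le\rho t_{k+1}$ for all $k\ge 1$, with fixed $\rho\in(0,1]$. Fix $\eta\in[\rho,1]$, $\gamma>0$, $\delta>0$, $\beta\ge0$. Algorithm: initial points $x_0=x_1\in\mathbb R^n$, $\lambda_0=\lambda_1\in\mathbb R^m$. For $k=1,2,\dots$: set $\alpha_k=(t_{k+1}-\eta)/\eta$, $c_k=t_{k+1}/\eta$, $\bar x_k=x_k+\frac{t_k-1}{t_{k+1}}(x_k-x_{k-1})$, $\bar\lambda_k=\lambda_k+\frac{t_k-1}{t_{k+1}}(\lambda_k-\lambda_{k-1})$, $p_k=c_k\bar\lambda_k-\alpha_k\lambda_k$, $r_k=\alpha_kAx_k+b$. Case I ($f$ convex and $C^1$): $x_{k+1}=\arg\min_{x}\{f(x)+\frac\beta2\|Ax-b\|^2+\frac1{2\gamma}\|x-\bar x_k\|^2+\langle p_k,Ax-b\rangle+\frac\delta2\|c_kAx-r_k\|^2\}$. Case II ($f$ convex with $L$-Lipschitz gradient, and $\gamma\le 1/L$):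 $x_{k+1}=\arg\min_{x}\{\langle\nabla f(\bar x_k),x\rangle+\frac\beta2\|Ax-b\|^2+\frac1{2\gamma}\|x-\bar x_k\|^2+\langle p_k,Ax-b\rangle+\frac\delta2\|c_kAx-r_k\|^2\}$. Then $\lambda_{k+1}=\bar\lambda_k+\delta(c_kAx_{k+1}-r_k)$. *)

(* Defs.v *)
From mathcomp Require Import all_boot all_algebra reals.
Set Implicit Arguments. Unset Strict Implicit. Unset Printing Implicit Defensive.
Import GRing.Theory Num.Theory.
Local Open Scope ring_scope.

Section Defs.
Variable R : realType.

Definition dot n (u v : 'cV[R]_n) : R := \sum_(i < n) u i 0 * v i 0.
Definition nsq n (u : 'cV[R]_n) : R := dot u u.
Definition enorm n (u : 'cV[R]_n) : R := Num.sqrt (nsq u).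

Definition convex_fun n (f : 'cV[R]_n -> R) : Prop :=
  forall (x y : 'cV[R]_n) (s : R), 0 <= s -> s <= 1 ->
    f ((1 - s) *: x + s *: y) <= (1 - s) * f x + s * f y.

Definition is_gradient n (f : 'cV[R]_n -> R) (g : 'cV[R]_n -> 'cV[R]_n) : Prop :=
  forall x : 'cV[R]_n, forall eps : R, 0 < eps -> exists2 d : R, 0 < d &
    forall h : 'cV[R]_n, enorm h < d ->
      `| f (x + h) - f x - dot (g x) h | <= eps * enorm h.

Definition continuous_map n k (g : 'cV[R]_n -> 'cV[R]_k) : Prop :=
  forall x : 'cV[R]_n, forall eps : R, 0 < eps -> exists2 d : R, 0 < d &
    forall y : 'cV[R]_n, enorm (y - x) < d -> enorm (g y - g x) < eps.

Definition lipschitz_map n (g : 'cV[R]_n -> 'cV[R]_n) (L : R) : Prop :=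
  forall x y : 'cV[R]_n, enorm (g x - g y) <= L * enorm (x - y).

Definition is_argmin n (Phi : 'cV[R]_n -> R) (x : 'cV[R]_n) : Prop :=
  forall y : 'cV[R]_n, Phi x <= Phi y.

Definition KKT m n (g : 'cV[R]_n -> 'cV[R]_n) (A : 'M[R]_(m, n)) (b : 'cV[R]_m)
  (xs : 'cV[R]_n) (ls : 'cV[R]_m) : Prop :=
  A *m xs = b /\ g xs + A^T *m ls = 0.

Definition Lbeta m n (f : 'cV[R]_n -> R) (A : 'M[R]_(m, n)) (b : 'cV[R]_m)
  (beta : R) (x : 'cV[R]_n) (l : 'cV[R]_m) : R :=
  f x + dot l (A *m x - b) + beta / 2 * nsq (A *m x - b).

(* ||z||_M^2 for z = (x, l) *)
Definition Mnsq m n (gamma delta : R) (x : 'cV[R]_n) (l : 'cV[R]_m) : R :=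
  gamma^-1 * nsq x + delta^-1 * nsq l.

Definition param_seq (t : nat -> R) (rho : R) : Prop :=
  (forall k, (1 <= k)%N -> t k <= t k.+1) /\
  t 1%N = 1 /\
  (forall k, (2 < k)%N -> 1 < t k) /\
  (forall M : R, exists N : nat, forall k, (N <= k)%N -> M <= t k) /\
  (forall k, (1 <= k)%N -> t k.+1 ^+ 2 - t k ^+ 2 <= rho * t k.+1).

Definition alpha_k (t : nat -> R) (eta : R) k : R := (t k.+1 - eta) / eta.
Definition c_k (t : nat -> R) (eta : R) k : R := t k.+1 / eta.
Definition xbar_k n (t : nat -> R) (x : nat -> 'cV[R]_n) k : 'cV[R]_n :=
  x k + ((t k - 1) / t k.+1) *: (x k - x k.-1).
Definition lbar_k m (t : nat -> R) (l : nat -> 'cV[R]_m) k : 'cV[R]_m :=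
  l k + ((t k - 1) / t k.+1) *: (l k - l k.-1).
Definition p_k m (t : nat -> R) (eta : R) (l : nat -> 'cV[R]_m) k : 'cV[R]_m :=
  c_k t eta k *: lbar_k t l k - alpha_k t eta k *: l k.
Definition r_k m n (t : nat -> R) (eta : R) (A : 'M[R]_(m, n)) (b : 'cV[R]_m)
  (x : nat -> 'cV[R]_n) k : 'cV[R]_m :=
  alpha_k t eta k *: (A *m x k) + b.

(* common (smooth-part-free) terms of the subproblem objective *)
Definition sub_rest m n (A : 'M[R]_(m, n)) (b : 'cV[R]_m) (beta gamma delta eta : R)
  (t : nat -> R) (x : nat -> 'cV[R]_n) (l : nat -> 'cV[R]_m) k (y : 'cV[R]_n) : R :=
  beta / 2 * nsq (A *m y - b) + (2 * gamma)^-1 * nsq (y - xbar_k t x k)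
  + dot (p_k t eta l k) (A *m y - b)
  + delta / 2 * nsq (c_k t eta k *: (A *m y) - r_k t eta A b x k).

Definition PhiI m n (f : 'cV[R]_n -> R) (A : 'M[R]_(m, n)) (b : 'cV[R]_m)
  (beta gamma delta eta : R) t x l k (y : 'cV[R]_n) : R :=
  f y + sub_rest A b beta gamma delta eta t x l k y.

Definition PhiII m n (g : 'cV[R]_n -> 'cV[R]_n) (A : 'M[R]_(m, n)) (b : 'cV[R]_m)
  (beta gamma delta eta : R) t x l k (y : 'cV[R]_n) : R :=
  dot (g (xbar_k t x k)) y + sub_rest A b beta gamma delta eta t x l k y.

Definition lam_update m n (A : 'M[R]_(m, n)) (b : 'cV[R]_m) (delta eta : R)
  (t : nat -> R) (x : nat -> 'cV[R]_n) (l : nat -> 'cV[R]_m) k : 'cV[R]_m :=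
  lbar_k t l k + delta *: (c_k t eta k *: (A *m x k.+1) - r_k t eta A b x k).

Definition H_k m n f (A : 'M[R]_(m, n)) b beta (x : nat -> 'cV[R]_n)
  (xs : 'cV[R]_n) (ls : 'cV[R]_m) k : R :=
  Lbeta f A b beta (x k) ls - Lbeta f A b beta xs ls.

Definition B_k m n (gamma delta eta : R) (t : nat -> R) (x : nat -> 'cV[R]_n)
  (l : nat -> 'cV[R]_m) xs ls k : R :=
  let wx := eta *: (x k - xs) + (t k - 1) *: (x k - x k.-1) in
  let wl := eta *: (l k - ls) + (t k - 1) *: (l k - l k.-1) in
  1 / 2 * Mnsq gamma delta wx wl
  + eta * (1 - eta) / 2 * Mnsq gamma delta (x k - xs) (l k - ls).

Definition E_k m n f (A : 'M[R]_(m, n)) b (beta gamma delta eta : R) t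
  (x : nat -> 'cV[R]_n) (l : nat -> 'cV[R]_m) xs ls k : R :=
  t k ^+ 2 * H_k f A b beta x xs ls k + B_k gamma delta eta t x l xs ls k.

End Defs.

(* Main.v *)
Require Import Defs.
From mathcomp Require Import all_boot all_order all_algebra reals.
From mathcomp Require Import ring lra.
Import Order.TTheory GRing.Theory Num.Theory.
Local Open Scope ring_scope.
Set Warnings "-notation-overridden,-ambiguous-paths".
Set Implicit Arguments. Unset Strict Implicit.

Section Dot.
Variable R : realType.
Variable p : nat.
Implicit Types u v w : 'cV[R]_p.

Lemma dotC u v : dot u v = dot v u.
Proof. by apply: eq_bigr => i _; rewrite mulrC. Qed.
Lemma dotDl u v w : dot (u + v) w = dot u w + dot v w.
Proof. by rewrite /dot -big_split; apply: eq_bigr => i _; rewrite mxE mulrDl. Qed.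
Lemma dotZl (a : R) u v : dot (a *: u) v = a * dot u v.
Proof. by rewrite /dot mulr_sumr; apply: eq_bigr => i _; rewrite mxE mulrA. Qed.
Lemma dotNl u v : dot (- u) v = - dot u v.
Proof. by rewrite -scaleN1r dotZl mulN1r. Qed.
Lemma dotDr u v w : dot w (u + v) = dot w u + dot w v.
Proof. by rewrite dotC dotDl !(dotC w). Qed.
Lemma dotZr (a : R) u v : dot v (a *: u) = a * dot v u.
Proof. by rewrite dotC dotZl dotC. Qed.
Lemma dotNr u v : dot v (- u) = - dot v u.
Proof. by rewrite dotC dotNl dotC. Qed.
Lemma dot0r u : dot u 0 = 0.
Proof. by rewrite /dot big1 // => i _; rewrite mxE mulr0. Qed.
Lemma nsq_ge0 u : 0 <= nsq u.
Proof. by rewrite /nsq /dot sumr_ge0 // => i _; rewrite -expr2 sqr_ge0. Qed.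
Lemma enorm_ge0 u : 0 <= enorm u.
Proof. exact: sqrtr_ge0. Qed.
Lemma enormZ (a : R) u : 0 <= a -> enorm (a *: u) = a * enorm u.
Proof.
move=> a0; rewrite /enorm /nsq dotZl dotZr mulrA sqrtrM ?mulr_ge0 //.
by rewrite -expr2 sqrtr_sqr ger0_norm.
Qed.
Lemma enorm_sq u : enorm u ^+ 2 = nsq u.
Proof. by rewrite /enorm sqr_sqrtr // nsq_ge0. Qed.

End Dot.

Lemma dot_trmx (R : realType) m n (A : 'M[R]_(m, n)) (u : 'cV[R]_m) (v : 'cV[R]_n) :
  dot (A^T *m u) v = dot u (A *m v).
Proof.
rewrite /dot.
under eq_bigr => i _ do rewrite !mxE big_distrl /=.
rewrite exchange_big /=; apply: eq_bigr => j _; rewrite !mxE big_distrr /=.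
by apply: eq_bigr => i _; rewrite mxE; ring.
Qed.

Ltac dotexp := rewrite /nsq ?(dotDl, dotDr, dotZl, dotZr, dotNl, dotNr).

Lemma Bident (R : realType) p (zm z z' zs : 'cV[R]_p) (s t eta : R) : s != 0 ->
  1 / 2 * nsq (eta *: (z' - zs) + (s - 1) *: (z' - z))
  - 1 / 2 * nsq (eta *: (z - zs) + (t - 1) *: (z - zm))
  + eta * (1 - eta) / 2 * (nsq (z' - zs) - nsq (z - zs))
  = s * dot (z' - (z + ((t - 1) / s) *: (z - zm))) (eta *: (z - zs) + s *: (z' - z))
    - 1 / 2 * s ^+ 2 * nsq (z' - (z + ((t - 1) / s) *: (z - zm)))
    - (1 - eta) * (s - 1 / 2) * nsq (z' - z).
Proof.
move=> s0; dotexp.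
rewrite (dotC z' z) (dotC z' zs) (dotC z' zm) (dotC z zs) (dotC z zm) (dotC zs zm).
by field.
Qed.

Lemma grad_ineq (R : realType) n (f : 'cV[R]_n -> R) g :
  convex_fun f -> is_gradient f g ->
  forall x y : 'cV[R]_n, f x + dot (g x) (y - x) <= f y.
Proof.
move=> fc fg x y; set h := y - x.
rewrite -subr_ge0 leNgt; apply/negP => gap1.
have gap0 : 0 < f x + dot (g x) h - f y by lra.
move: gap0; set gap := _ - _ => gap0.
have en0 := enorm_ge0 h.
have e1 : 0 < enorm h + 1 by lra.
have e0 : 0 < gap / (enorm h + 1) by rewrite divr_gt0.
have [d d0 Hd] := fg x _ e0.
set sg := d / (2 * (enorm h + 1)).
set s := sg / (sg + 1).
have sg0 : 0 < sg by rewrite divr_gt0 // mulr_gt0.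
have s0 : 0 < s by rewrite divr_gt0 // addr_gt0.
have s1 : s <= 1 by rewrite ler_pdivrMr ?addr_gt0 //; lra.
have ss : s <= sg by rewrite ler_pdivrMr ?addr_gt0 //; nra.
have hs : enorm (s *: h) < d.
  rewrite (enormZ _ (ltW s0)).
  apply: (le_lt_trans (y := sg * enorm h)); first by rewrite ler_wpM2r.
  rewrite /sg mulrAC ltr_pdivrMr ?mulr_gt0 //; nra.
have := Hd _ hs; rewrite (enormZ _ (ltW s0)) dotZr.
have -> : x + s *: h = (1 - s) *: x + s *: y.
  by apply/matrixP => i j; rewrite /h !mxE; ring.
have := fc x y s (ltW s0) s1.
move=> cv /ler_normlP [H1 _].
have : s * dot (g x) h - gap / (enorm h + 1) * (s * enorm h) <= s * (f y - f x) by lra.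
rewrite mulrCA -mulrBr ler_pM2l //.
have : gap / (enorm h + 1) * enorm h < gap.
  rewrite mulrAC ltr_pdivrMr ?ltr_pwDr // ltr_pM2l //; lra.
rewrite /gap; lra.
Qed.

Lemma young (R : realType) p (u v : 'cV[R]_p) (c : R) :
  0 < c -> nsq u <= c ^+ 2 * nsq v -> dot u v <= c * nsq v.
Proof.
move=> c0 huv.
have h := nsq_ge0 (u - c *: v).
move: h; dotexp; rewrite (dotC v u) -/(nsq u) -/(nsq v) => h.
have : c * dot u v <= c * (c * nsq v) by nra.
by rewrite ler_pM2l.
Qed.

Lemma archi_le0 (R : realType) (a C : R) : 0 <= C ->
  (forall N : nat, (0 < N)%N -> a <= C / N%:R) -> a <= 0.
Proof.
move=> C0 H; rewrite leNgt; apply/negP => a0.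
set N := (Num.Def.archi_bound (C / a)).+1.
have hb := archi_boundP (divr_ge0 C0 (ltW a0)).
have HN : C / a < N%:R.
  apply: (lt_le_trans hb); rewrite ler_nat /N; exact: leqnSn.
have N0 : (0 < N%:R :> R) by rewrite ltr0n.
have := H N isT; rewrite ler_pdivlMr // => h.
move: HN; rewrite ltr_pdivrMr // => h2.
nra.
Qed.

Lemma descent (R : realType) n (f : 'cV[R]_n -> R) g (L : R) :
  convex_fun f -> is_gradient f g -> 0 < L -> lipschitz_map g L ->
  forall x d : 'cV[R]_n, f (x + d) <= f x + dot (g x) d + L / 2 * nsq d.
Proof.
move=> fc fg L0 Lg x d.
have nd0 := nsq_ge0 d.
have step : forall N : nat, (0 < N)%N -> forall j : nat,
   f (x + (j%:R / N%:R) *: d) - f x <=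
   (j%:R / N%:R) * dot (g x) d + L * nsq d * (j%:R * (j%:R + 1)) / (2 * N%:R ^+ 2).
  move=> N N0; have NR : (0 < N%:R :> R) by rewrite ltr0n.
  elim=> [|j IH].
    rewrite mul0r scale0r addr0 subrr mul0r !mul0r mulr0 mul0r addr0 //.
  set a := j%:R / N%:R in IH *.
  set a' := j.+1%:R / N%:R.
  have ha' : a' = a + 1 / N%:R by rewrite /a' /a -natr1; field; rewrite gt_eqF.
  have a0 : 0 <= a by rewrite divr_ge0 // ler0n.
  have gi := grad_ineq fc fg (x + a' *: d) (x + a *: d).
  have E : x + a *: d - (x + a' *: d) = (- (1 / N%:R)) *: d.
    by apply/matrixP => i k; rewrite !mxE ha'; ring.
  move: gi; rewrite E dotZr.
  have -> : g (x + a' *: d) = g x + (g (x + a' *: d) - g x) by rewrite [RHS]addrC subrK.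
  rewrite dotDl => gi.
  have iN : 0 < 1 / N%:R :> R by apply: divr_gt0.
  have a'0 : 0 < a' by rewrite ha'; lra.
  have yb : dot (g (x + a' *: d) - g x) d <= (L * a') * nsq d.
    apply: young; first by rewrite mulr_gt0.
    have hl := Lg (x + a' *: d) x.
    have E2 : x + a' *: d - x = a' *: d by rewrite addrC addKr.
    move: hl; rewrite E2; rewrite (enormZ _ (ltW a'0)) -!enorm_sq => hl.
    have := enorm_ge0 (g (x + a' *: d) - g x).
    have := enorm_ge0 d.
    nra.
  rewrite -[j.+1%:R]natr1 -/a.
  have e1 : a' = (j%:R + 1) / N%:R by rewrite /a' -natr1.
  have e2 : a = j%:R / N%:R by [].
  have E3 : L * nsq d * ((j%:R + 1) * (j%:R + 1 + 1)) / (2 * N%:R ^+ 2)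
       = L * nsq d * (j%:R * (j%:R + 1)) / (2 * N%:R ^+ 2) + L * a' * nsq d / N%:R.
    by rewrite e1; field; rewrite gt_eqF.
  rewrite E3.
  have e3 : 1 / N%:R * ((L * a') * nsq d) = L * a' * nsq d / N%:R by field; rewrite gt_eqF.
  move: yb gi IH; set D := dot _ d; set D0 := dot (g x) d.
  move=> yb gi IH.
  have e4 : a' * D0 = a * D0 + 1 / N%:R * D0 by rewrite ha' mulrDl.
  have := ler_wpM2l (ltW iN) yb.
  lra.
have key : forall N : nat, (0 < N)%N ->
    f (x + d) - f x - dot (g x) d - L / 2 * nsq d <= (L * nsq d / 2) / N%:R.
  move=> N N0; have NR : (0 < N%:R :> R) by rewrite ltr0n.
  have := step N N0 N; rewrite divff ?gt_eqF // scale1r mul1r.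
  have -> : L * nsq d * (N%:R * (N%:R + 1)) / (2 * N%:R ^+ 2) = L / 2 * nsq d + (L * nsq d / 2) / N%:R.
    by field; rewrite gt_eqF.
  lra.
have := archi_le0 (divr_ge0 (mulr_ge0 (ltW L0) nd0) (ler0n _ 2)) key.
lra.
Qed.

Lemma argmin_core (R : realType) (F0 F1 D C Q0 : R) (Fs Qs : R -> R) :
  (forall s, 0 < s -> s <= 1 -> Fs s <= (1 - s) * F0 + s * F1) ->
  (forall s, Qs s = Q0 + s * D + s ^+ 2 * C) ->
  (forall s, F0 + Q0 <= Fs s + Qs s) -> 0 <= F1 - F0 + D.
Proof.
move=> HF HQ Hmin; rewrite leNgt; apply/negP => X0.
set X := F1 - F0 + D in X0.
have C0 := normr_ge0 C.
have den0 : 0 < - X + `|C| + 1 by lra.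
set s := - X / (- X + `|C| + 1).
have s0 : 0 < s by rewrite /s divr_gt0 //; lra.
have s1 : s <= 1 by rewrite /s ler_pdivrMr //; lra.
have es : s * (- X + `|C| + 1) = - X by rewrite /s mulfVK // gt_eqF.
have h1 := HF s s0 s1; have h2 := HQ s; have h3 := Hmin s.
have h4 : 0 <= s * X + s ^+ 2 * C by rewrite /X; nra.
have h5 : 0 <= X + s * C.
  have e : s * (X + s * C) = s * X + s ^+ 2 * C by ring.
  by rewrite -e pmulr_rge0 in h4.
have h6 : s * C <= s * `|C| by rewrite ler_pM2l // ler_norm.
nra.
Qed.

Lemma nsqDZ (R : realType) p (a w : 'cV[R]_p) (s : R) :
  nsq (a + s *: w) = nsq a + 2 * s * dot a w + s ^+ 2 * nsq w.
Proof. dotexp; rewrite (dotC w a); ring. Qed.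

Lemma dotDZ (R : realType) p (q a w : 'cV[R]_p) (s : R) :
  dot q (a + s *: w) = dot q a + s * dot q w.
Proof. by rewrite dotDr dotZr. Qed.

Definition Dlin (R : realType) m n (A : 'M[R]_(m, n)) b (beta gamma delta eta : R) t x l k
  (y0 v : 'cV[R]_n) : R :=
  beta * dot (A *m y0 - b) (A *m v) + gamma^-1 * dot (y0 - xbar_k t x k) v
  + dot (p_k t eta l k + (delta * c_k t eta k) *: (c_k t eta k *: (A *m y0) - r_k t eta A b x k))
        (A *m v).

Definition Cq (R : realType) m n (A : 'M[R]_(m, n)) (beta gamma delta eta : R) t k
  (v : 'cV[R]_n) : R :=
  beta / 2 * nsq (A *m v) + (2 * gamma)^-1 * nsq v + delta / 2 * c_k t eta k ^+ 2 * nsq (A *m v).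

Lemma Qexp (R : realType) m n (A : 'M[R]_(m, n)) b (beta gamma delta eta : R) t x l k
  (y0 v : 'cV[R]_n) (s : R) : gamma != 0 ->
  sub_rest A b beta gamma delta eta t x l k (y0 + s *: v)
  = sub_rest A b beta gamma delta eta t x l k y0
    + s * Dlin A b beta gamma delta eta t x l k y0 v
    + s ^+ 2 * Cq A beta gamma delta eta t k v.
Proof.
move=> g0; rewrite /sub_rest /Dlin /Cq mulmxDr -scalemxAr.
move: (A *m y0) (A *m v) (xbar_k t x k) (p_k t eta l k) (r_k t eta A b x k) (c_k t eta k) => Ay Av xb p r c.
have -> : Ay + s *: Av - b = (Ay - b) + s *: Av by apply/matrixP => i j; rewrite !mxE; ring.
have -> : y0 + s *: v - xb = (y0 - xb) + s *: v by apply/matrixP => i j; rewrite !mxE; ring.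
have -> : c *: (Ay + s *: Av) - r = (c *: Ay - r) + (s * c) *: Av by apply/matrixP => i j; rewrite !mxE; ring.
rewrite !nsqDZ dotDZ (dotDl p) dotZl invfM.
by field.
Qed.

Lemma opt_ineq (R : realType) m n (f : 'cV[R]_n -> R) g (A : 'M[R]_(m, n)) b
  (t : nat -> R) (eta gamma delta beta : R) (x : nat -> 'cV[R]_n) (l : nat -> 'cV[R]_m) k :
  convex_fun f -> is_gradient f g -> 0 < gamma ->
  ((forall k, (1 <= k)%N ->
       is_argmin (PhiI f A b beta gamma delta eta t x l k) (x k.+1))
   \/
   (exists L : R, 0 < L /\ lipschitz_map g L /\ gamma <= L^-1 /\
     forall k, (1 <= k)%N ->
       is_argmin (PhiII g A b beta gamma delta eta t x l k) (x k.+1))) ->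
  (1 <= k)%N ->
  exists eps : R, [/\ 0 <= eps, eps <= (2 * gamma)^-1 * nsq (x k.+1 - xbar_k t x k) &
    forall y : 'cV[R]_n, f (x k.+1) - Dlin A b beta gamma delta eta t x l k (x k.+1) (y - x k.+1) - eps <= f y].
Proof.
move=> fc fg gam0 Hcase k1.
have g0 : gamma != 0 by rewrite gt_eqF.
set x' := x k.+1; set xb := xbar_k t x k.
case: Hcase => [HI | [L [L0 [Lg [gL HII]]]]].
  exists 0; split => //; first by rewrite mulr_ge0 ?nsq_ge0 // invr_ge0 mulr_ge0 // ltW.
  move=> y.
  have hF : forall s, 0 < s -> s <= 1 -> f (x' + s *: (y - x')) <= (1 - s) * f x' + s * f (x' + (y - x')).
    move=> s s0 s1; have := fc x' y s (ltW s0) s1.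
    have -> : (1 - s) *: x' + s *: y = x' + s *: (y - x') by apply/matrixP => i j; rewrite !mxE; ring.
    by rewrite [x' + (y - x')]addrC subrK.
  have hM : forall s, f x' + sub_rest A b beta gamma delta eta t x l k x' <=
      f (x' + s *: (y - x')) + sub_rest A b beta gamma delta eta t x l k (x' + s *: (y - x')).
    by move=> s; exact: (HI k k1 (x' + s *: (y - x'))).
  have := argmin_core hF (fun s => @Qexp R m n A b beta gamma delta eta t x l k x' (y - x') s g0) hM.
  rewrite [x' + (y - x')]addrC subrK; lra.
have gL' : L * gamma <= 1.
  have := ler_wpM2l (ltW L0) gL; rewrite mulfV ?gt_eqF //.
exists (L / 2 * nsq (x' - xb)); split.
- by rewrite mulr_ge0 ?nsq_ge0 // divr_ge0 // ltW.
- rewrite invfM; have P0 := nsq_ge0 (x' - xb).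
  have Lg' : L <= gamma^-1 by rewrite -(ler_pM2r gam0) mulVf ?gt_eqF.
  have d0 : 0 <= gamma^-1 - L by rewrite subr_ge0.
  have := mulr_ge0 d0 P0.
  lra.
move=> y.
have hF : forall s, 0 < s -> s <= 1 -> dot (g xb) (x' + s *: (y - x')) <=
    (1 - s) * dot (g xb) x' + s * dot (g xb) (x' + (y - x')).
  move=> s _ _; rewrite !dotDr dotZr !dotDr; lra.
have hM : forall s, dot (g xb) x' + sub_rest A b beta gamma delta eta t x l k x' <=
    dot (g xb) (x' + s *: (y - x')) + sub_rest A b beta gamma delta eta t x l k (x' + s *: (y - x')).
  by move=> s; exact: (HII k k1 (x' + s *: (y - x'))).
have := argmin_core hF (fun s => @Qexp R m n A b beta gamma delta eta t x l k x' (y - x') s g0) hM.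
rewrite [x' + (y - x')]addrC subrK.
have desc := descent fc fg L0 Lg xb (x' - xb).
rewrite [xb + (x' - xb)]addrC subrK in desc.
have gi := grad_ineq fc fg xb y.
move: desc gi; rewrite !dotDr !dotNr.
lra.
Qed.

Lemma nsqB (R : realType) p (a c : 'cV[R]_p) :
  nsq (a - c) = nsq a - 2 * dot c a + nsq c.
Proof. dotexp; rewrite (dotC a c); ring. Qed.

Lemma core (R : realType) m n (f : 'cV[R]_n -> R) (A : 'M[R]_(m, n)) (b : 'cV[R]_m)
  (D : 'cV[R]_n -> R) (xm x0 x1 xs : 'cV[R]_n) (lm l0 l1 ls lh : 'cV[R]_m)
  (s tk rho eta gamma delta beta eps : R) :
  0 < eta -> eta <= 1 -> 1 <= s -> 0 < gamma -> 0 < delta -> 0 <= beta ->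
  s ^+ 2 - tk ^+ 2 <= rho * s -> A *m xs = b ->
  (forall y, f xs <= Lbeta f A b beta y ls) ->
  0 <= eps -> eps <= (2 * gamma)^-1 * nsq (x1 - (x0 + ((tk - 1) / s) *: (x0 - xm))) ->
  (forall y, f x1 - D (y - x1) - eps <= f y) ->
  (forall u v, D (u + v) = D u + D v) -> (forall (a : R) u, D (a *: u) = a * D u) ->
  D (eta *: (x0 - xs) + s *: (x1 - x0)) =
    beta * dot (A *m x1 - b) (A *m (eta *: (x0 - xs) + s *: (x1 - x0)))
    + gamma^-1 * dot (x1 - (x0 + ((tk - 1) / s) *: (x0 - xm))) (eta *: (x0 - xs) + s *: (x1 - x0))
    + dot lh (A *m (eta *: (x0 - xs) + s *: (x1 - x0))) ->
  lh = eta^-1 *: (eta *: (l0 - ls) + s *: (l1 - l0)) + ls ->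
  l1 - (l0 + ((tk - 1) / s) *: (l0 - lm)) = (delta / eta) *: (A *m (eta *: (x0 - xs) + s *: (x1 - x0))) ->
  s ^+ 2 * (Lbeta f A b beta x1 ls - f xs) +
  (1 / 2 *
   (gamma^-1 * nsq (eta *: (x1 - xs) + (s - 1) *: (x1 - x0)) +
    delta^-1 * nsq (eta *: (l1 - ls) + (s - 1) *: (l1 - l0))) +
   eta * (1 - eta) / 2 *
   (gamma^-1 * nsq (x1 - xs) + delta^-1 * nsq (l1 - ls))) -
  (tk ^+ 2 * (Lbeta f A b beta x0 ls - f xs) +
   (1 / 2 *
    (gamma^-1 * nsq (eta *: (x0 - xs) + (tk - 1) *: (x0 - xm)) +
     delta^-1 * nsq (eta *: (l0 - ls) + (tk - 1) *: (l0 - lm))) +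
    eta * (1 - eta) / 2 *
    (gamma^-1 * nsq (x0 - xs) + delta^-1 * nsq (l0 - ls)))) <=
  (rho - eta) * s * (Lbeta f A b beta x0 ls - f xs) -
  (1 - eta) * (s - 1 / 2) *
  (gamma^-1 * nsq (x1 - x0) + delta^-1 * nsq (l1 - l0)).
Proof.
move=> eta0 eta1 s1 gam0 del0 beta0 tst HAxs Lmin eps0 epsb Hopt DD DZ Dw V2 V3.
have s0 : s != 0 by rewrite gt_eqF //; lra.
have Ix := Bident xm x0 x1 xs tk eta s0.
have Il := Bident lm l0 l1 ls tk eta s0.
have O1 := Hopt xs; have O2 := Hopt x0.
have G2 : 0 <= (rho * s - s ^+ 2 + tk ^+ 2) * (Lbeta f A b beta x0 ls - f xs).
  by apply: mulr_ge0; [lra | rewrite subr_ge0; exact: Lmin].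
set xb := x0 + ((tk - 1) / s) *: (x0 - xm) in epsb Dw Ix *.
set lb := l0 + ((tk - 1) / s) *: (l0 - lm) in V3 Il *.
set w := eta *: (x0 - xs) + s *: (x1 - x0) in Dw V3 Ix *.
set wl := eta *: (l0 - ls) + s *: (l1 - l0) in V2 Il *.
have V1 : A *m w = s *: (A *m x1 - b) - (s - eta) *: (A *m x0 - b).
  rewrite /w mulmxDr -!scalemxAr !mulmxBr HAxs.
  by move: (A *m x0) (A *m x1) => u v; apply/matrixP => i j; rewrite !mxE; ring.
have F1 : dot lh (A *m w) = eta^-1 * dot wl (A *m w) + dot ls (A *m w).
  by rewrite V2 dotDl dotZl.
have F3 : dot ls (A *m w) = s * dot ls (A *m x1 - b) - (s - eta) * dot ls (A *m x0 - b).
  by rewrite V1 (dotDr (s *: (A *m x1 - b))) dotNr !dotZr.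
have F4 : dot (A *m x1 - b) (A *m w) =
    s * nsq (A *m x1 - b) - (s - eta) * dot (A *m x1 - b) (A *m x0 - b).
  by rewrite V1 (dotDr (s *: (A *m x1 - b))) dotNr !dotZr.
have Dcomb : eta * D (xs - x1) + (s - eta) * D (x0 - x1) = - D w.
  rewrite -!DZ -DD.
  have -> : eta *: (xs - x1) + (s - eta) *: (x0 - x1) = (-1) *: w.
    by rewrite /w; apply/matrixP => i j; rewrite !mxE; ring.
  by rewrite DZ; ring.
have G1 : s * (s * f x1 + D w - s * eps) <= s * (eta * f xs + (s - eta) * f x0).
  apply: ler_wpM2l; first lra.
  have := ler_wpM2l (ltW eta0) O1.
  have se : 0 <= s - eta by lra.
  have := ler_wpM2l se O2.
  lra.
rewrite Dw F1 F3 F4 in G1.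
move: (congr1 (fun z => gamma^-1 * z) Ix) => /= Ix'.
have Il' : delta^-1 * (1 / 2 * nsq (eta *: (l1 - ls) + (s - 1) *: (l1 - l0)) -
    1 / 2 * nsq (eta *: (l0 - ls) + (tk - 1) *: (l0 - lm)) +
    eta * (1 - eta) / 2 * (nsq (l1 - ls) - nsq (l0 - ls)))
  = s * (eta^-1 * dot wl (A *m w)) - delta^-1 * (1 / 2 * s ^+ 2 * nsq (l1 - lb))
    - delta^-1 * ((1 - eta) * (s - 1 / 2) * nsq (l1 - l0)).
  rewrite Il.
  have F2 : dot (l1 - lb) wl = (delta / eta) * dot wl (A *m w) by rewrite V3 dotZl dotC.
  by rewrite F2; field; rewrite !gt_eqF.
have G3 : 0 <= beta / 2 * (s * (s - eta) * nsq ((A *m x0 - b) - (A *m x1 - b))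
    + s * eta * nsq (A *m x1 - b)).
  apply: mulr_ge0; first lra.
  apply: addr_ge0; apply: mulr_ge0; try exact: nsq_ge0; nra.
rewrite nsqB in G3.
have G4 : 0 <= delta^-1 * (1 / 2 * s ^+ 2 * nsq (l1 - lb)).
  apply: mulr_ge0; first by rewrite invr_ge0 ltW.
  by apply: mulr_ge0; [nra | exact: nsq_ge0].
have G5 : s ^+ 2 * eps <= s ^+ 2 * (2^-1 * gamma^-1 * nsq (x1 - xb)).
  by apply: ler_wpM2l; [nra | rewrite -invfM].
move: G2; rewrite /Lbeta => G2.
rewrite /Lbeta.
lra.
Qed.

Lemma DlinD (R : realType) m n (A : 'M[R]_(m, n)) b (beta gamma delta eta : R) t x l k y0 u v :
  Dlin A b beta gamma delta eta t x l k y0 (u + v)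
  = Dlin A b beta gamma delta eta t x l k y0 u + Dlin A b beta gamma delta eta t x l k y0 v.
Proof. rewrite /Dlin mulmxDr !dotDr; ring. Qed.

Lemma DlinZ (R : realType) m n (A : 'M[R]_(m, n)) b (beta gamma delta eta : R) t x l k y0 (a : R) u :
  Dlin A b beta gamma delta eta t x l k y0 (a *: u)
  = a * Dlin A b beta gamma delta eta t x l k y0 u.
Proof. rewrite /Dlin -scalemxAr !dotZr; ring. Qed.

Theorem lemma3p2 (R : realType) (m n : nat)
  (f : 'cV[R]_n -> R) (g : 'cV[R]_n -> 'cV[R]_n)
  (A : 'M[R]_(m, n)) (b : 'cV[R]_m)
  (t : nat -> R) (rho eta gamma delta beta : R)
  (x : nat -> 'cV[R]_n) (l : nat -> 'cV[R]_m)
  (xs : 'cV[R]_n) (ls : 'cV[R]_m) :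
  convex_fun f -> is_gradient f g -> continuous_map g ->
  KKT g A b xs ls ->
  0 < rho -> rho <= 1 -> param_seq t rho ->
  rho <= eta -> eta <= 1 -> 0 < gamma -> 0 < delta -> 0 <= beta ->
  x 0%N = x 1%N -> l 0%N = l 1%N ->
  (forall k, (1 <= k)%N -> l k.+1 = lam_update A b delta eta t x l k) ->
  ((forall k, (1 <= k)%N ->
       is_argmin (PhiI f A b beta gamma delta eta t x l k) (x k.+1))
   \/
   (exists L : R, 0 < L /\ lipschitz_map g L /\ gamma <= L^-1 /\
     forall k, (1 <= k)%N ->
       is_argmin (PhiII g A b beta gamma delta eta t x l k) (x k.+1))) ->
  forall k, (1 <= k)%N ->
    E_k f A b beta gamma delta eta t x l xs ls k.+1
    - E_k f A b beta gamma delta eta t x l xs ls k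
    <= (rho - eta) * t k.+1 * H_k f A b beta x xs ls k
       - (1 - eta) * (t k.+1 - 1 / 2)
         * Mnsq gamma delta (x k.+1 - x k) (l k.+1 - l k).

Proof.
move=> fc fg _ [HAxs Hgxs] rho0 rho1 [tmono [t1 [_ [_ tstep]]]] rhoeta eta1 gam0 del0 beta0 _ _ Hl Hcase k k1.
have eta0 : 0 < eta by apply: lt_le_trans rhoeta.
have tge1 : forall j, (1 <= j)%N -> 1 <= t j.
  elim=> [//|j IH] _; case: j IH => [|j] IH; first by rewrite t1.
  apply: (le_trans (IH isT)); exact: tmono.
have tk1 := tge1 k k1.
have s1 : 1 <= t k.+1 := le_trans tk1 (tmono k k1).
have [eps [eps0 epsb Hopt]] := @opt_ineq R m n f g A b t eta gamma delta beta x l k fc fg gam0 Hcase k1.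
have eg : g xs = - (A^T *m ls) by apply/eqP; rewrite -addr_eq0 Hgxs.
have LS : Lbeta f A b beta xs ls = f xs.
  by rewrite /Lbeta HAxs subrr dot0r /nsq dot0r; ring.
have Lmin : forall y, f xs <= Lbeta f A b beta y ls.
  move=> y; have := grad_ineq fc fg xs y.
  rewrite eg dotNl dot_trmx mulmxBr HAxs /Lbeta.
  have := nsq_ge0 (A *m y - b).
  have := beta0; nra.
have Hl' := Hl k k1.
rewrite /E_k /H_k /B_k /Mnsq /= LS.
move: epsb Hopt; rewrite /xbar_k => epsb Hopt.
have eta0' : eta != 0 by rewrite gt_eqF.
have s0 : t k.+1 != 0 by rewrite gt_eqF //; lra.
apply: (@core R m n f A b (Dlin A b beta gamma delta eta t x l k (x k.+1))
   (x k.-1) (x k) (x k.+1) xs (l k.-1) (l k) (l k.+1) ls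
   (p_k t eta l k + (delta * c_k t eta k) *: (c_k t eta k *: (A *m x k.+1) - r_k t eta A b x k))
   (t k.+1) (t k) rho eta gamma delta beta eps) => //.
- exact: tstep.
- by move=> u v; rewrite DlinD.
- by move=> a u; rewrite DlinZ.
- rewrite Hl' /lam_update /p_k /c_k /alpha_k /r_k /lbar_k.
  move: (A *m x k) (A *m x k.+1) => u v.
  by apply/matrixP => i j; rewrite !mxE; field; rewrite eta0' s0.
- rewrite Hl' /lam_update /c_k /r_k /alpha_k /lbar_k mulmxDr -!scalemxAr !mulmxBr HAxs.
  move: (A *m x k) (A *m x k.+1) => u v.
  by apply/matrixP => i j; rewrite !mxE; field; rewrite eta0' s0.
Qed.
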